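(* Let $K\ge2$ and let $\mathbf u^*=\{u_i^*\}_{i=1}^K\subset\mathbb R^d$ satisfy $\|u_i^*-u_j^*\|_2\ge100\sqrt{d\log K}$ for all $i\ne j$. If $\mathbf u=\{u_i\}_{i=1}^K\subset\mathbb R^d$ satisfies $d_{\mathrm{TV}}(p_{\mathbf u}(x),p_{\mathbf u^*}(x))\le\frac1{4K}$, then there is a permutation $\pi$ of $[K]$ with $\|u_i^*-u_{\pi(i)}\|_2\le16\sqrt{d\log K}$ for every $i\in[K]$.
   Context: $p_{\mathbf u}(x)=\frac1K\sum_{i=1}^KN(u_i,I_d)$ denotes the equal-weight Gaussian mixture density with centers $\mathbf u$; $d_{\mathrm{TV}}(P,Q)=\frac12\int|p-q|$. *)

(* Defs.v *)
From HB Require Import structures.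
From mathcomp Require Import all_boot all_order all_algebra all_fingroup.
From mathcomp Require Import all_classical all_reals all_analysis.
Set Implicit Arguments. Unset Strict Implicit. Unset Printing Implicit Defensive.
Import Order.TTheory GRing.Theory Num.Theory.
Local Open Scope ring_scope.
Local Open Scope ereal_scope.

Section Defs.
Variable R : realType.

Definition norm2 (d : nat) (x : 'rV[R]_d) : R :=
  Num.sqrt (\sum_(i < d) (x ord0 i) ^+ 2)%R.

Definition gauss_pdf (d : nat) (u x : 'rV[R]_d) : R :=
  ((Num.sqrt (2 * pi)) ^- d * expR (- (norm2 (x - u)) ^+ 2 / 2))%R.

Definition mixture_pdf (K d : nat) (u : 'I_K -> 'rV[R]_d) (x : 'rV[R]_d) : R :=
  (K%:R^-1 * \sum_(i < K) gauss_pdf (u i) x)%R.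

(* Lebesgue integral over R^d, written as the iterated one-dimensional
   Lebesgue integrals (coordinates d-1, ..., 0), in the extended reals.
   For the nonnegative continuous integrands used here it coincides with
   the integral against d-dimensional Lebesgue measure (Tonelli). *)
Fixpoint iint (n : nat) (f : (nat -> R) -> \bar R) : \bar R :=
  match n with
  | 0%N => f (fun _ => 0%R)
  | n'.+1 => \int[@lebesgue_measure R]_(t in setT)
               iint n' (fun v => f (fun k => if k == n' then t else v k))
  end.

Definition integral_Rd (d : nat) (f : 'rV[R]_d -> \bar R) : \bar R :=
  iint d (fun v => f (\row_(i < d) v (nat_of_ord i))).

Definition dTV (d : nat) (p q : 'rV[R]_d -> R) : \bar R :=
  (2%:R^-1)%:E * integral_Rd (fun x => (`|p x - q x|)%:E).

End Defs.

(* Main.v *)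
Require Import Defs.
From HB Require Import structures.
From mathcomp Require Import all_boot all_order all_algebra all_fingroup.
From mathcomp Require Import all_classical all_reals all_analysis.
From mathcomp Require Import measurable_realfun.
From mathcomp Require Import ring lra.
Import Order.TTheory GRing.Theory Num.Theory HBNNSimple.
Local Open Scope ring_scope.
Set Implicit Arguments. Unset Strict Implicit. Unset Printing Implicit Defensive.

Section Int.
Variable R : realType.
Local Notation mu := (@lebesgue_measure R).
Local Open Scope ereal_scope.

Lemma int_mono (f g : R -> \bar R) : (forall x, 0 <= f x) -> (forall x, f x <= g x) ->
  \int[mu]_(x in setT) f x <= \int[mu]_(x in setT) g x.
Proof.
move=> f0 fg.
have g0 : forall x, 0 <= g x by move=> x; exact: le_trans (f0 x) (fg x).
rewrite ge0_integralTE // ge0_integralTE //.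
apply: le_ereal_sup => _ [h /= hf <-]; exists h => //= x.
exact: le_trans (hf x) (fg x).
Qed.

Lemma int_sub (a : R -> \bar R) (g : R -> R) : (forall x, 0 <= a x) ->
  (forall x, (0 <= g x)%R) -> measurable_fun setT g ->
  \int[mu]_(x in setT) (a x + (g x)%:E) <=
  \int[mu]_(x in setT) a x + \int[mu]_(x in setT) (g x)%:E.
Proof.
move=> a0 g0 mg.
have ag0 : forall x, 0 <= a x + (g x)%:E by move=> x; rewrite adde_ge0 // lee_fin.
rewrite ge0_integralTE //.
apply: ge_ereal_sup => _ [h /= hle <-].
have := integral_nnsfun mu measurableT h; rewrite patch_setT => <-.
pose a' x := (Num.max (h x - g x) 0)%R.
have ma' : measurable_fun setT a'.
  apply: measurable_realfun.measurable_maxr; last exact: measurable_cst.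
  by apply: measurable_realfun.measurable_funB => //; exact: measurable_funP.
apply: (@le_trans _ _ (\int[mu]_(x in setT) ((a' x)%:E + (g x)%:E))).
  apply: int_mono => x; first by rewrite lee_fin.
  by rewrite -EFinD lee_fin /a' -lerBlDr le_max lexx.
have a'0 : forall x, (0 <= a' x)%R by move=> x; rewrite le_max lexx orbT.
rewrite ge0_integralD //; first last.
- exact/measurable_EFinP.
- by move=> x _; rewrite lee_fin.
- exact/measurable_EFinP.
- by move=> x _; rewrite lee_fin.
apply: leeD => //; apply: int_mono => x; first by rewrite lee_fin le_max lexx orbT.
rewrite /a'; case: (leP (h x - g x)%R 0%R) => hg.
  exact: a0.
have := hle x; case: (a x) => [r||] //=.
  by rewrite -EFinD !lee_fin lerBlDr.
by move=> _; rewrite leey.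
Qed.


Definition upd (v : nat -> R) (n : nat) (t : R) : nat -> R :=
  fun k => if k == n then t else v k.

Lemma iintS n (F : (nat -> R) -> \bar R) : iint n.+1 F =
  \int[mu]_(t in setT) iint n (fun v => F (upd v n t)).
Proof. by []. Qed.

Lemma iint_ge0 n (F : (nat -> R) -> \bar R) : (forall v, 0 <= F v) -> 0 <= iint n F.
Proof.
elim: n F => [|n IH] F F0 //=.
by apply: integral_ge0 => t _; apply: IH => v.
Qed.

Lemma iint_mono n (F G : (nat -> R) -> \bar R) : (forall v, 0 <= F v) -> (forall v, F v <= G v) ->
  iint n F <= iint n G.
Proof.
elim: n F G => [|n IH] F G F0 FG //=.
apply: int_mono => t; first by apply: iint_ge0.
by apply: IH.
Qed.

Definition pf N (c : R) (phi : 'I_N -> R -> R) (v : nat -> R) : \bar R :=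
  (c * \prod_(k < N) phi k (v k))%:E.

Definition phiu N (phi : 'I_N -> R -> R) n t : 'I_N -> R -> R :=
  fun k => if (k == n :> nat) then (fun _ => phi k t) else phi k.

Lemma pf_upd N c (phi : 'I_N -> R -> R) v n t : pf c phi (upd v n t) = pf c (phiu phi n t) v.
Proof.
rewrite /pf /phiu /upd; congr (_ * _)%R%:E; apply: eq_bigr => k _.
by case: ifP.
Qed.

Lemma iint_pf n N c (phi : 'I_N -> R -> R) (I : 'I_N -> R) : (n <= N)%N ->
  (0 <= c)%R -> (forall k t, (0 <= phi k t)%R) ->
  (forall k, measurable_fun setT (phi k)) ->
  (forall k : 'I_N, (k < n)%N -> \int[mu]_(t in setT) (phi k t)%:E = (I k)%:E) ->
  iint n (pf c phi) = (c * \prod_(k < N) (if (k < n)%N then I k else phi k 0%R))%:E.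
Proof.
elim: n c phi => [|n IH] c phi hn c0 phi0 mphi hI.
  by rewrite /= /pf; congr (_ * _)%R%:E; apply: eq_bigr.
have I0 : forall k : 'I_N, (k < n.+1)%N -> (0 <= I k)%R.
  move=> k hk; rewrite -lee_fin -hI //; apply: integral_ge0 => t _.
  by rewrite lee_fin.
pose n0 : 'I_N := Ordinal hn.
pose C := (c * \prod_(k < N | k != n0) (if (k < n)%N then I k else phi k 0%R))%R.
have C0 : (0 <= C)%R.
  apply: mulr_ge0 => //; apply: prodr_ge0 => k _; case: ifP => hk //.
  by apply: I0; rewrite ltnS ltnW.
have eqi : forall t, iint n (fun v => pf c phi (upd v n t)) = (C%:E * (phi n0 t)%:E).
  move=> t.
  have -> : (fun v => pf c phi (upd v n t)) = pf c (phiu phi n t).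
    by apply/funext => v; rewrite pf_upd.
  rewrite (IH c (phiu phi n t)) //; first last.
  - move=> k hk; rewrite /phiu ifN //; last by rewrite neq_ltn hk.
    by apply: hI; rewrite ltnS ltnW.
  - move=> k; rewrite /phiu; case: ifP => _ //; exact: measurable_cst.
  - by move=> k t'; rewrite /phiu; case: ifP.
  - by rewrite ltnW.
  rewrite -EFinM; congr EFin; rewrite /C -mulrA; congr (_ * _)%R.
  rewrite (bigD1 n0) //= mulrC; congr (_ * _)%R; last first.
    by rewrite /phiu /= eqxx ltnn.
  apply: eq_bigr => k hk.
  have hkn : (k == n :> nat) = false.
    by apply/negbTE; move: hk; apply: contra => /eqP hkn; apply/eqP/val_inj.
  by rewrite /phiu hkn.
rewrite iintS.
under eq_integral do rewrite eqi.
rewrite ge0_integralZl_EFin //; first last.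
- by apply/measurable_EFinP; apply: mphi.
- by move=> t _; rewrite lee_fin.
rewrite hI // -EFinM; congr EFin; rewrite /C -mulrA; congr (_ * _)%R.
rewrite [in RHS](bigD1 n0) //= ltnSn mulrC; congr (_ * _)%R.
apply: eq_bigr => k hk.
have hkn : (k == n :> nat) = false.
  by apply/negbTE; move: hk; apply: contra => /eqP hkn; apply/eqP/val_inj.
by have -> : (k < n.+1)%N = (k < n)%N by rewrite ltnS leq_eqVlt hkn.
Qed.


Lemma iint_pf_upd n N c (phi : 'I_N -> R -> R) (I : 'I_N -> R) (hn : (n < N)%N) :
  (0 <= c)%R -> (forall k t, (0 <= phi k t)%R) ->
  (forall k, measurable_fun setT (phi k)) ->
  (forall k : 'I_N, (k < n)%N -> \int[mu]_(t in setT) (phi k t)%:E = (I k)%:E) ->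
  exists C : R, (0 <= C)%R /\ forall t,
    iint n (pf c (phiu phi n t)) = (C * phi (Ordinal hn) t)%:E.
Proof.
move=> c0 phi0 mphi hI.
have I0 : forall k : 'I_N, (k < n)%N -> (0 <= I k)%R.
  move=> k hk; rewrite -lee_fin -hI //; apply: integral_ge0 => t _.
  by rewrite lee_fin.
pose n0 : 'I_N := Ordinal hn.
exists (c * \prod_(k < N | k != n0) (if (k < n)%N then I k else phi k 0%R))%R.
split.
  apply: mulr_ge0 => //; apply: prodr_ge0 => k _; case: ifP => hk //.
  by apply: I0.
move=> t.
rewrite (iint_pf (I := I)) //; first last.
- move=> k hk; rewrite /phiu ifN //; last by rewrite neq_ltn hk.
  by apply: hI.
- move=> k; rewrite /phiu; case: ifP => _ //; exact: measurable_cst.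
- by move=> k t'; rewrite /phiu; case: ifP.
- by rewrite ltnW.
congr EFin; rewrite -mulrA; congr (_ * _)%R.
rewrite (bigD1 n0) //= mulrC; congr (_ * _)%R; last first.
  by rewrite /phiu /= eqxx ltnn.
apply: eq_bigr => k hk.
have hkn : (k == n :> nat) = false.
  by apply/negbTE; move: hk; apply: contra => /eqP hkn; apply/eqP/val_inj.
by rewrite /phiu hkn.
Qed.

Lemma iint_sub n N c (phi : 'I_N -> R -> R) (I : 'I_N -> R) (a : (nat -> R) -> \bar R) :
  (n <= N)%N ->
  (0 <= c)%R -> (forall k t, (0 <= phi k t)%R) ->
  (forall k, measurable_fun setT (phi k)) ->
  (forall k : 'I_N, (k < n)%N -> \int[mu]_(t in setT) (phi k t)%:E = (I k)%:E) ->
  (forall v, 0 <= a v) ->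
  iint n (fun v => a v + pf c phi v) <= iint n a + iint n (pf c phi).
Proof.
elim: n a phi => [|n IH] a phi hn c0 phi0 mphi hI a0; first by [].
have [C [C0 hC]] := iint_pf_upd hn c0 phi0 mphi
   (fun k hk => hI k (ltnW hk)).
rewrite !iintS.
have -> : (fun t => iint n (fun v => pf c phi (upd v n t))) =
          (fun t => (C * phi (Ordinal hn) t)%:E).
  apply/funext => t; rewrite -hC; congr iint; apply/funext => v.
  by rewrite pf_upd.
apply: le_trans; last apply: int_sub.
- apply: int_mono => t.
    apply: iint_ge0 => v; apply: adde_ge0 => //.
    by rewrite /pf lee_fin mulr_ge0 // prodr_ge0.
  rewrite -hC.
  have -> : (fun v => a (upd v n t) + pf c phi (upd v n t)) =
            (fun v => a (upd v n t) + pf c (phiu phi n t) v).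
    by apply/funext => v; rewrite pf_upd.
  apply: (IH _ (phiu phi n t) (ltnW hn) c0) => //.
  - by move=> k t'; rewrite /phiu; case: ifP.
  - move=> k; rewrite /phiu; case: ifP => _ //; exact: measurable_cst.
  - move=> k hk; rewrite /phiu ifN //; last by rewrite neq_ltn hk.
    by apply: hI; rewrite ltnS ltnW.
- by move=> t; apply: iint_ge0.
- by move=> t; rewrite mulr_ge0.
- by apply: measurable_funM => //; exact: measurable_cst.
Qed.


Lemma iint_subs n N (T : Type) (s : seq T) (c : T -> R) (phi : T -> 'I_N -> R -> R)
  (I : T -> 'I_N -> R) (a : (nat -> R) -> \bar R) :
  (n <= N)%N ->
  (forall j, 0 <= c j)%R -> (forall j k t, (0 <= phi j k t)%R) ->
  (forall j k, measurable_fun setT (phi j k)) ->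
  (forall j (k : 'I_N), (k < n)%N ->
     \int[mu]_(t in setT) (phi j k t)%:E = (I j k)%:E) ->
  (forall v, 0 <= a v) ->
  iint n (fun v => a v + \sum_(j <- s) pf (c j) (phi j) v) <=
  iint n a + \sum_(j <- s) iint n (pf (c j) (phi j)).
Proof.
move=> hn c0 phi0 mphi hI a0.
have pf0 : forall j v, 0 <= pf (c j) (phi j) v.
  by move=> j v; rewrite /pf lee_fin mulr_ge0 // prodr_ge0.
elim: s => [|j s IH].
  rewrite big_nil adde0.
  have -> : (fun v => a v + \sum_(j <- [::]) pf (c j) (phi j) v) = a.
    by apply/funext => v; rewrite big_nil adde0.
  by [].
have -> : (fun v => a v + \sum_(i <- j :: s) pf (c i) (phi i) v) =
  (fun v => (a v + \sum_(i <- s) pf (c i) (phi i) v) + pf (c j) (phi j) v).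
  by apply/funext => v; rewrite big_cons addeCA addeC.
apply: le_trans.
  apply: (iint_sub (I := I j)) => //.
    by move=> k hk; apply: hI.
  by move=> v; rewrite adde_ge0 // sume_ge0.
by rewrite big_cons [X in _ <= X]addeCA [X in _ <= X]addeC; apply: leeD.
Qed.

Definition phiG (lam c u t : R) : R :=
  ((Num.sqrt (2 * pi))^-1 * expR (- lam * (t - c) ^+ 2) * expR (- (t - u) ^+ 2 / 2))%R.

Definition IG (lam c u : R) : R :=
  ((Num.sqrt (1 + 2 * lam))^-1 * expR (- lam * (c - u) ^+ 2 / (1 + 2 * lam)))%R.

Lemma phiG_ge0 lam c u t : (0 <= phiG lam c u t)%R.
Proof.
by rewrite /phiG !mulr_ge0 ?expR_ge0 // invr_ge0 sqrtr_ge0.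
Qed.

Lemma measurable_phiG lam c u : measurable_fun setT (phiG lam c u).
Proof.
apply: measurable_funM; last first.
  apply: measurableT_comp => //; apply: measurable_funM; last exact: measurable_cst.
  apply: measurable_funN; apply: measurable_funX.
  by apply: measurable_funB => //; exact: measurable_cst.
apply: measurable_funM; first exact: measurable_cst.
apply: measurableT_comp => //; apply: measurable_funM; first exact: measurable_cst.
apply: measurable_funX.
by apply: measurable_funB => //; exact: measurable_cst.
Qed.

Lemma int_phiG lam c u : (0 < lam)%R ->
  \int[mu]_(t in setT) (phiG lam c u t)%:E = (IG lam c u)%:E.
Proof.
move=> lam0.
set a := (1 + 2 * lam)%R.
have a0 : (0 < a)%R by rewrite /a addr_gt0 // mulr_gt0.
set s := ((Num.sqrt a)^-1)%R.
have sa0 : (0 < Num.sqrt a)%R by rewrite sqrtr_gt0.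
have s0 : s != 0%R by rewrite /s invr_eq0 gt_eqF.
have s2 : (s ^+ 2 = a^-1)%R by rewrite /s exprVn sqr_sqrtr // ltW.
set m := ((2 * lam * c + u) / a)%R.
have pi0 : (0 < pi :> R)%R by exact: pi_gt0.
have sp0 : (0 < Num.sqrt (2 * pi) :> R)%R by rewrite sqrtr_gt0 mulr_gt0.
have pw : forall t, phiG lam c u t = (IG lam c u * normal_pdf m s t)%R.
  move=> t; rewrite normal_pdfE // /normal_peak /normal_fun s2.
  rewrite -mulrnAr sqrtrM ?invr_ge0 ?ltW // sqrtrV ?ltW // -[(pi *+ 2)%R]mulr_natl -[(a^-1 *+ 2)%R]mulr_natl.
  rewrite /phiG /IG -/a.
  have e : (- lam * (t - c) ^+ 2 + - (t - u) ^+ 2 / 2 =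
     - lam * (c - u) ^+ 2 / a + - (t - m) ^+ 2 / (2 * a^-1))%R.
    rewrite /m /a; field.
    by rewrite -/a gt_eqF.
  rewrite -[LHS]mulrA -expRD e expRD.
  field.
  by rewrite !gt_eqF.
under eq_integral do rewrite pw EFinM.
rewrite ge0_integralZl_EFin //; first last.
- rewrite /IG mulr_ge0 ?expR_ge0 // invr_ge0 sqrtr_ge0.
- apply/measurable_EFinP; exact: measurable_normal_pdf.
- by move=> t _; rewrite lee_fin normal_pdf_ge0.
by rewrite integral_normal_pdf mule1.
Qed.

End Int.

Section Norm.
Variable R : realType.

Lemma norm2_ge0 d (x : 'rV[R]_d) : 0 <= norm2 x.
Proof. exact: sqrtr_ge0. Qed.

Lemma norm2_sqr d (x : 'rV[R]_d) : norm2 x ^+ 2 = \sum_(i < d) (x ord0 i) ^+ 2.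
Proof. by rewrite /norm2 sqr_sqrtr // sumr_ge0 // => i _; rewrite sqr_ge0. Qed.

Lemma norm2_opp d (x : 'rV[R]_d) : norm2 (- x) = norm2 x.
Proof. by rewrite /norm2; congr Num.sqrt; apply: eq_bigr => i _; rewrite mxE sqrrN. Qed.

Lemma norm2_eq0 d (x : 'rV[R]_d) i : norm2 x = 0 -> x ord0 i = 0.
Proof.
move=> h; have : norm2 x ^+ 2 = 0 by rewrite h expr0n.
rewrite norm2_sqr => /psumr_eq0P => H.
by apply/eqP; rewrite -sqrf_eq0; apply/eqP; apply: H => // j _; rewrite sqr_ge0.
Qed.

Lemma cs_ineq d (x y : 'rV[R]_d) :
  \sum_(i < d) x ord0 i * y ord0 i <= norm2 x * norm2 y.
Proof.
set a := norm2 x; set b := norm2 y.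
have [a0|apos] := eqVneq a 0.
  rewrite a0 mul0r big1 // => i _; by rewrite (norm2_eq0 _ a0) mul0r.
have [b0|bpos] := eqVneq b 0.
  rewrite b0 mulr0 big1 // => i _; by rewrite (norm2_eq0 _ b0) mulr0.
have ha : 0 < a by rewrite lt0r apos norm2_ge0.
have hb : 0 < b by rewrite lt0r bpos norm2_ge0.
have key : 0 <= \sum_(i < d) (b * x ord0 i - a * y ord0 i) ^+ 2.
  by apply: sumr_ge0 => i _; rewrite sqr_ge0.
have e : \sum_(i < d) (b * x ord0 i - a * y ord0 i) ^+ 2 =
  b ^+ 2 * a ^+ 2 + a ^+ 2 * b ^+ 2 - 2 * (a * b) * \sum_(i < d) x ord0 i * y ord0 i.
  rewrite (eq_bigr (fun i => b ^+ 2 * x ord0 i ^+ 2 + a ^+ 2 * y ord0 i ^+ 2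
     - 2 * (a * b) * (x ord0 i * y ord0 i))); last by move=> i _; ring.
  by rewrite sumrB big_split /= -!mulr_sumr -!norm2_sqr.
rewrite e in key.
have hab : 0 < a * b by rewrite mulr_gt0.
have : (a * b) * (\sum_(i < d) x ord0 i * y ord0 i) <= (a * b) * (a * b).
  nra.
by rewrite ler_pM2l.
Qed.

Lemma norm2_triangle d (x y : 'rV[R]_d) : norm2 (x + y) <= norm2 x + norm2 y.
Proof.
rewrite -(ler_pXn2r (n := 2)) ?nnegrE ?addr_ge0 ?norm2_ge0 //.
rewrite sqrrD !norm2_sqr.
have -> : \sum_(i < d) (x + y) ord0 i ^+ 2 =
  \sum_(i < d) x ord0 i ^+ 2 + \sum_(i < d) y ord0 i ^+ 2 +
  2 * \sum_(i < d) x ord0 i * y ord0 i.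
  rewrite mulr_sumr -!big_split /=; apply: eq_bigr => i _; rewrite mxE; ring.
have := cs_ineq x y; lra.
Qed.

End Norm.

Section Prod.
Variable R : realType.

Lemma gauss_pdf_ge0 d (w x : 'rV[R]_d) : 0 <= gauss_pdf w x.
Proof.
by rewrite /gauss_pdf mulr_ge0 ?expR_ge0 // invr_ge0 exprn_ge0 // sqrtr_ge0.
Qed.

Lemma prod_phiG d (lam : R) (cs w : 'rV[R]_d) (v : nat -> R) :
  \prod_(k < d) phiG lam (cs ord0 k) (w ord0 k) (v k) =
  expR (- lam * norm2 (\row_(i < d) v i - cs) ^+ 2) * gauss_pdf w (\row_(i < d) v i).
Proof.
rewrite /phiG !big_split /= prodr_const card_ord -!expR_sum /gauss_pdf !norm2_sqr.
have e1 : \sum_(k < d) - lam * (v k - cs ord0 k) ^+ 2 =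
   - lam * \sum_(k < d) (\row_(i < d) v i - cs) ord0 k ^+ 2.
  by rewrite mulr_sumr; apply: eq_bigr => k _; rewrite !mxE.
have e2 : \sum_(k < d) - (v k - w ord0 k) ^+ 2 / 2 =
   - (\sum_(k < d) (\row_(i < d) v i - w) ord0 k ^+ 2) / 2.
  by rewrite -sumrN mulr_suml; apply: eq_bigr => k _; rewrite !mxE.
rewrite e1 e2 exprVn; ring.
Qed.

Lemma prod_IG d (lam : R) (cs w : 'rV[R]_d) :
  \prod_(k < d) IG lam (cs ord0 k) (w ord0 k) =
  ((Num.sqrt (1 + 2 * lam))^-1) ^+ d *
  expR (- lam * norm2 (cs - w) ^+ 2 / (1 + 2 * lam)).
Proof.
rewrite /IG big_split /= prodr_const card_ord -expR_sum norm2_sqr.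
congr (_ * expR _).
rewrite mulr_sumr mulr_suml; apply: eq_bigr => k _; rewrite !mxE; ring.
Qed.

Lemma num_contra (y A : R) : 0 < y -> 3 / 4 <= A ->
  y * A <= 2 * (y / 4) + A * (y / 4) -> False.
Proof. move=> hy hA h; nra. Qed.

End Prod.

Section Main.
Variable R : realType.
Local Notation mu := (@lebesgue_measure R).

Lemma far_contra (d K : nat) (hK : (2 <= K)%N) (hd : (0 < d)%N)
  (ustar u : 'I_K -> 'rV[R]_d) (i0 : 'I_K) :
  (forall j, 16 * Num.sqrt (d%:R * ln (K%:R : R)) < norm2 (ustar i0 - u j)) ->
  (dTV (mixture_pdf u) (mixture_pdf ustar) <= ((4 * K)%:R^-1)%:E)%E -> False.
Proof.
move=> hfar hTV.
set Kr : R := K%:R.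
have Kr2 : 2 <= Kr by rewrite /Kr (ler_nat R 2 K).
have Kr0 : 0 < Kr by apply: lt_le_trans Kr2.
set dr : R := d%:R.
have dr1 : 1 <= dr by rewrite /dr (ler_nat R 1 d).
set lam : R := (4 * dr)^-1.
have lam0 : 0 < lam by rewrite /lam invr_gt0 mulr_gt0 // (lt_le_trans ltr01 dr1).
have dr0 : dr != 0 by rewrite gt_eqF // (lt_le_trans ltr01 dr1).
have hld : lam * dr = 4^-1 by rewrite /lam; field; rewrite dr0.
have lam4 : lam <= 4^-1.
  by rewrite -hld ler_peMr // ltW.
set a : R := 1 + 2 * lam.
set cs := ustar i0.
set P := mixture_pdf u; set Q := mixture_pdf ustar.
set F : (nat -> R) -> \bar R := fun v =>
   (`|P (\row_(i < d) v i) - Q (\row_(i < d) v i)|)%:E.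
set r : R := ((4 * K)%:R)^-1.
have hX : (iint d F <= (2 * r)%:E)%E.
  move: hTV; rewrite /dTV /integral_Rd -/r => h.
  have -> : iint d F = (2%:E * ((2%:R^-1)%:E * iint d F))%E.
    by rewrite muleA -EFinM divff // mul1e.
  by rewrite EFinM; apply: lee_wpmul2l => //; rewrite lee_fin.
set psi : 'I_d -> R -> R := fun k => phiG lam (cs ord0 k) (cs ord0 k).
set phi : 'I_K -> 'I_d -> R -> R := fun j k => phiG lam (cs ord0 k) (u j ord0 k).
have pw : forall v, (pf Kr^-1 psi v <= F v + \sum_(j < K) pf Kr^-1 (phi j) v)%E.
  move=> v; rewrite /pf /psi /phi prod_phiG.
  under eq_bigr do rewrite prod_phiG.
  rewrite sumEFin -EFinD lee_fin /F.
  set x := \row_(i < d) v i.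
  set f := expR (- lam * norm2 (x - cs) ^+ 2).
  have f0 : 0 <= f by exact: expR_ge0.
  have f1 : f <= 1.
    rewrite /f -expR0 ler_expR mulNr oppr_le0; apply: mulr_ge0; [exact: ltW | exact: sqr_ge0].
  have hQ : Kr^-1 * gauss_pdf cs x <= Q x.
    rewrite /Q /mixture_pdf ler_pM2l ?invr_gt0 //.
    rewrite (bigD1 i0) //= lerDl sumr_ge0 // => j _; exact: gauss_pdf_ge0.
  have hP : \sum_(j < K) Kr^-1 * (f * gauss_pdf (u j) x) = f * P x.
    rewrite /P /mixture_pdf mulr_sumr mulr_sumr; apply: eq_bigr => j _; ring.
  rewrite hP.
  have : f * (Q x - P x) <= `|P x - Q x|.
    rewrite distrC.
    have := normr_ge0 (Q x - P x); have := ler_norm (Q x - P x).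
    set z := Q x - P x => h1 h2.
    have h3 : 0 <= f * (`|z| - z) by rewrite mulr_ge0 // subr_ge0.
    have h4 : 0 <= (1 - f) * `|z| by rewrite mulr_ge0 // subr_ge0.
    nra.
  have : 0 <= gauss_pdf cs x by exact: gauss_pdf_ge0.
  nra.
have pf0 : forall c (ph : 'I_d -> R -> R), 0 <= c -> (forall k t, 0 <= ph k t) ->
    forall v, (0 <= pf c ph v)%E.
  by move=> c ph c0 ph0 v; rewrite /pf lee_fin mulr_ge0 // prodr_ge0.
have Kri0 : 0 <= Kr^-1 by rewrite invr_ge0 ltW.
have hstep : (iint d (pf Kr^-1 psi) <=
             iint d F + \sum_(j < K) iint d (pf Kr^-1 (phi j)))%E.
  apply: (@le_trans _ _ (iint d (fun v => F v + \sum_(j < K) pf Kr^-1 (phi j) v))).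
    by apply: iint_mono => //; apply: pf0 => // k t; exact: phiG_ge0.
  apply: (@iint_subs _ d d 'I_K (index_enum 'I_K) (fun _ => Kr^-1) phi
            (fun j k => IG lam (cs ord0 k) (u j ord0 k)) F) => //.
  - by move=> j k t; exact: phiG_ge0.
  - by move=> j k; exact: measurable_phiG.
  - by move=> j k _; exact: int_phiG.
  - by move=> v; rewrite /F lee_fin.
have ev : forall w : 'rV[R]_d,
    iint d (pf Kr^-1 (fun k => phiG lam (cs ord0 k) (w ord0 k))) =
    (Kr^-1 * \prod_(k < d) IG lam (cs ord0 k) (w ord0 k))%:E.
  move=> w; rewrite (iint_pf (I := fun k => IG lam (cs ord0 k) (w ord0 k))) //.
  - by congr (_ * _)%:E; apply: eq_bigr => k _; rewrite ltn_ord.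
  - by move=> k t; exact: phiG_ge0.
  - by move=> k; exact: measurable_phiG.
  - by move=> k _; exact: int_phiG.
have final : Kr^-1 * \prod_(k < d) IG lam (cs ord0 k) (cs ord0 k) <=
   2 * r + \sum_(j < K) Kr^-1 * \prod_(k < d) IG lam (cs ord0 k) (u j ord0 k).
  rewrite -lee_fin EFinD -sumEFin -ev.
  under eq_bigr do rewrite -ev.
  by apply: le_trans hstep _; apply: leeD.
rewrite !prod_IG in final.
rewrite -/a in final.
set A := ((Num.sqrt a)^-1) ^+ d in final.
rewrite (eq_bigr (fun j => Kr^-1 * (A * expR (- lam * norm2 (cs - u j) ^+ 2 / a))))
  in final; last by move=> j _; rewrite prod_IG.
have e0 : expR (- lam * norm2 (cs - cs) ^+ 2 / a) = 1.
  have n0 : norm2 (cs - cs) = 0.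
    by rewrite subrr /norm2 big1 ?sqrtr0 // => k _; rewrite mxE expr0n.
  by rewrite n0 expr0n /= mulr0 mul0r expR0.
rewrite e0 mulr1 in final.
set L := ln Kr.
have L0 : 0 < L by rewrite /L ln_gt0 // (lt_le_trans _ Kr2) // ltr1n.
have hr : r = (4 * Kr)^-1 by rewrite /r natrM.
have a1 : 1 <= a by rewrite /a lerDl mulr_ge0 // ltW.
have a32 : a <= 3 / 2 by rewrite /a; lra.
have hE : forall j, expR (- lam * norm2 (cs - u j) ^+ 2 / a) <= r.
  move=> j; set n := norm2 (cs - u j).
  set s := Num.sqrt (dr * L).
  have hn : 16 * s < n by exact: hfar.
  have s0 : 0 <= s by exact: sqrtr_ge0.
  have s2 : s ^+ 2 = dr * L by rewrite sqr_sqrtr // mulr_ge0 // ?ltW // (le_trans ler01 dr1).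
  have n2 : 256 * (dr * L) <= n ^+ 2 by rewrite -s2; nra.
  have ln4 : ln (4 : R) <= 2 * L.
    have -> : (4 : R) = 2 * 2 by rewrite -natrM.
    rewrite lnM ?posrE //.
    have : ln (2 : R) <= L by rewrite /L ler_ln ?posrE // (lt_le_trans _ Kr2).
    lra.
  have hl : 64 * L <= lam * n ^+ 2.
    have : lam * (256 * (dr * L)) <= lam * n ^+ 2 by rewrite ler_pM2l.
    have -> : lam * (256 * (dr * L)) = 64 * L.
      have -> : lam * (256 * (dr * L)) = 256 * (lam * dr) * L by ring.
      by rewrite hld; field.
    by [].
  have key : ln 4 + L <= lam * n ^+ 2 / a.
    rewrite ler_pdivlMr; last exact: (lt_le_trans ltr01 a1).
    nra.
  have h4K : 0 < 4 * Kr by rewrite mulr_gt0.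
  rewrite hr -(lnK (x := 4 * Kr)) ?posrE // -expRN ler_expR.
  rewrite lnM ?posrE //.
  rewrite !mulNr lerN2 //.
have hA : 3 / 4 <= A.
  have sa : Num.sqrt a <= expR lam.
    apply: (@le_trans _ _ (1 + lam)); last exact: expR_ge1Dx.
    have -> : 1 + lam = Num.sqrt ((1 + lam) ^+ 2).
      by rewrite sqrtr_sqr ger0_norm // addr_ge0 // ltW.
    rewrite ler_sqrt ?sqr_ge0 // /a; nra.
  have sa0 : 0 < Num.sqrt a by rewrite sqrtr_gt0 (lt_le_trans ltr01 a1).
  have hB : (Num.sqrt a) ^+ d <= expR (4^-1).
    rewrite -hld expRM_natr.
    by rewrite ler_pXn2r // ?nnegrE ?expR_ge0 // ltW.
  have hE4 : expR (4^-1 : R) <= 4 / 3.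
    have h1 := expR_ge1Dx (- 4^-1 : R).
    rewrite expRN in h1.
    have hp : 0 < expR (4^-1 : R) by exact: expR_gt0.
    have := divff (negbT (gt_eqF hp)).
    set E := expR _ in h1 hp *.
    move=> hEE.
    have h2 : 0 <= E * (E^-1 - (1 - 4^-1)) by apply: mulr_ge0; [exact: ltW | rewrite subr_ge0].
    rewrite mulrBr hEE in h2.
    have e3 : E * (1 - 4^-1) = (E * 3) / 4 by field.
    move: h2; rewrite e3 subr_ge0 ler_pdivrMr // mul1r => h3.
    by rewrite ler_pdivlMr.
  have hB0 : 0 < (Num.sqrt a) ^+ d by rewrite exprn_gt0.
  rewrite /A exprVn.
  have := divff (negbT (gt_eqF hB0)).
  set B := (Num.sqrt a) ^+ d in hB hB0 *.
  have hBi : 0 < B^-1 by rewrite invr_gt0.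
  nra.
have hsum : \sum_(j < K) Kr^-1 * (A * expR (- lam * norm2 (cs - u j) ^+ 2 / a))
    <= A * r.
  apply: (@le_trans _ _ (\sum_(j < K) Kr^-1 * (A * r))).
    apply: ler_sum => j _; rewrite ler_pM2l ?invr_gt0 // ler_pM2l ?hE //.
    exact: (lt_le_trans _ hA).
  rewrite sumr_const card_ord -mulr_natl -/Kr mulrA mulfV ?gt_eqF // mul1r.
  by [].
have hKr : Kr * Kr^-1 = 1 by rewrite divff // gt_eqF.
have hy : 0 < Kr^-1 by rewrite invr_gt0.
rewrite hr in final hsum.
have h4 : (4 * Kr)^-1 = Kr^-1 / 4 by rewrite invfM mulrC.
rewrite h4 in final hsum.
set y := Kr^-1 in final hsum hy hKr.
apply: (num_contra hy hA).
apply: le_trans final _; rewrite lerD2l.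
exact: hsum.
Qed.

End Main.

Unset Implicit Arguments.

Theorem mainTheorem12 (R : realType) (d K : nat) (hK : (2 <= K)%N)
  (ustar u : 'I_K -> 'rV[R]_d) :
  (forall i j : 'I_K, i != j ->
     100 * Num.sqrt (d%:R * ln (K%:R : R)) <= norm2 (ustar i - ustar j)) ->
  (dTV (mixture_pdf u) (mixture_pdf ustar) <= ((4 * K)%:R^-1)%:E)%E ->
  exists pi : 'S_K, forall i : 'I_K,
    norm2 (ustar i - u (pi i)) <= 16 * Num.sqrt (d%:R * ln (K%:R : R)).
Proof.
move=> hsep hTV.
set s := Num.sqrt (d%:R * ln (K%:R : R)).
have s0 : 0 <= s by exact: sqrtr_ge0.
case: (posnP d) => [d0|dpos].
  exists 1%g => i; rewrite /norm2 big1 ?sqrtr0 ?mulr_ge0 //.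
  by move=> k _; exfalso; have := ltn_ord k; rewrite {2}d0.
have Kr1 : 1 < (K%:R : R) by rewrite (ltr_nat R 1 K).
have spos : 0 < s.
  rewrite /s sqrtr_gt0 mulr_gt0 // ?ln_gt0 //.
  by rewrite (ltr_nat R 0 d).
have near : forall i, exists j, norm2 (ustar i - u j) <= 16 * s.
  move=> i; case: (pickP (fun j => norm2 (ustar i - u j) <= 16 * s)) => [j hj|hn].
    by exists j.
  exfalso; apply: (far_contra hK dpos (i0 := i) _ hTV) => j.
  by rewrite ltNge hn.
pose sig i := odflt i [pick j | norm2 (ustar i - u j) <= 16 * s].
have hsig : forall i, norm2 (ustar i - u (sig i)) <= 16 * s.
  move=> i; rewrite /sig; case: pickP => [j hj|hn] //=.
  by have [j hj] := near i; move: (hn j); rewrite hj.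
have sig_inj : injective sig.
  move=> i i' e; apply/eqP; apply: contraT => hne.
  have h1 := hsep i i' hne.
  have h2 : norm2 (ustar i - ustar i') <= 32 * s.
    have -> : ustar i - ustar i' = (ustar i - u (sig i)) + - (ustar i' - u (sig i')).
      by rewrite e opprB addrA subrK.
    apply: le_trans (norm2_triangle _ _) _; rewrite norm2_opp.
    have := hsig i; have := hsig i'; lra.
  by move: (le_trans h1 h2); rewrite ler_pM2r // ler_nat.
exists (perm sig_inj) => i; rewrite permE; exact: hsig.
Qed.
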